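(* Let $z_1,\dots,z_n\in\mathbb C$ be pairwise distinct and $\mu_1,\dots,\mu_n$ variables; set $f_a(x)=(x+\mu_a)e^{z_ax}$ and $h_a=-\mu_a-\sum_{b\ne a}\frac1{z_a-z_b}$, $a=1,\dots,n$. Let $$W(u,x)=e^{-ux-\sum_{a=1}^nz_ax}\,\mathrm{Wr}[f_1(x),\dots,f_n(x),e^{ux}],\qquad W_0(x)=e^{-\sum_{a=1}^nz_ax}\,\mathrm{Wr}[f_1(x),\dots,f_n(x)].$$ Then $$W(u,x)=\Delta\cdot\det\bigl((u-Z)(x-Q)-1\bigr),\qquad W_0(x)=\Delta\cdot\det(x-Q).$$
   Context: For functions $g_1,\dots,g_m$ of $x$, $\mathrm{Wr}[g_1,\dots,g_m]=\det\bigl(g_k^{(l-1)}\bigr)_{k,l=1}^m$ is the Wronskian (derivatives in $x$). $\Delta=\prod_{1\le a<b\le n}(z_b-z_a)$. $Z=\mathrm{diag}(z_1,\dots,z_n)$, and $Q$ is the $n\times n$ matrix with $Q_{aa}=h_a$ and $Q_{ab}=1/(z_b-z_a)$ for $a\ne b$. *)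

(* Defs.v *)
From HB Require Import structures.
From mathcomp Require Import all_boot all_order all_algebra.
From mathcomp Require Import complex.
From mathcomp Require Import reals.
From mathcomp.analysis Require Import normedtype sequences exp trigo derive.

Set Implicit Arguments.
Unset Strict Implicit.
Unset Printing Implicit Defensive.

Import Order.TTheory GRing.Theory Num.Theory.
Local Open Scope ring_scope.
Local Open Scope complex_scope.

Section Defs.
Variable R : realType.

Definition cexp (w : R[i]) : R[i] :=
  (expR (complex.Re w) * cos (complex.Im w)) +i* (expR (complex.Re w) * sin (complex.Im w)).

(* n-th derivative of g : C -> C at the point w, computed along the real
   direction: d^n/dt^n g(w + t) at t = 0 (real and imaginary parts
   separately).  For holomorphic g this is the complex derivative g^(n)(w). *)
Definition cderivn (n : nat) (g : R[i] -> R[i]) (w : R[i]) : R[i] :=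
  (derive1n n (fun t : R => complex.Re (g (w + t%:C)) : R^o) 0)
  +i* (derive1n n (fun t : R => complex.Im (g (w + t%:C)) : R^o) 0).

Definition wronskian (m : nat) (g : 'I_m -> R[i] -> R[i]) (x : R[i]) : R[i] :=
  \det (\matrix_(k < m, l < m) cderivn l (g k) x).

Variable n : nat.

Definition Delta (z : 'I_n -> R[i]) : R[i] :=
  \prod_(a < n) \prod_(b < n | (a < b)%N) (z b - z a).

Definition fa (z mu : 'I_n -> R[i]) (a : 'I_n) : R[i] -> R[i] :=
  fun x => (x + mu a) * cexp (z a * x).

Definition ha (z mu : 'I_n -> R[i]) (a : 'I_n) : R[i] :=
  - mu a - \sum_(b < n | b != a) (z a - z b)^-1.

Definition Zmat (z : 'I_n -> R[i]) : 'M[R[i]]_n :=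
  \matrix_(a < n, b < n) (if a == b then z a else 0).

Definition Qmat (z mu : 'I_n -> R[i]) : 'M[R[i]]_n :=
  \matrix_(a < n, b < n) (if a == b then ha z mu a else (z b - z a)^-1).

Definition fam_u (z mu : 'I_n -> R[i]) (u : R[i]) (k : 'I_n.+1) : R[i] -> R[i] :=
  match unlift ord_max k with
  | Some a => fa z mu a
  | None => fun x => cexp (u * x)
  end.

Definition Wux (z mu : 'I_n -> R[i]) (u x : R[i]) : R[i] :=
  cexp (- (u * x) - \sum_(a < n) z a * x) * wronskian (fam_u z mu u) x.

Definition W0 (z mu : 'I_n -> R[i]) (x : R[i]) : R[i] :=
  cexp (- \sum_(a < n) z a * x) * wronskian (fa z mu) x.

End Defs.

(* Main.v *)
Require Import Defs.
From HB Require Import structures.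
From mathcomp Require Import all_boot all_order all_algebra.
From mathcomp Require Import complex.
From mathcomp Require Import reals.
From mathcomp.analysis Require Import normedtype sequences exp trigo derive realfun.
From mathcomp Require Import boolp functions ring lra zify.
Import Order.TTheory GRing.Theory Num.Theory.
Import numFieldNormedType.Exports.
Local Open Scope ring_scope.

Section Alg.
Variable F : fieldType.
Definition cnF (c d z : F) (n : nat) := z ^+ n * c + n%:R * z ^+ n.-1 * d.

Variables (m : nat) (w : 'I_m -> F).
Hypothesis winj : injective w.

Definition Pb (b : 'I_m) : {poly F} := \prod_(c < m | c != b) ('X - (w c)%:P).
Definition kk b := (Pb b).[w b].
Definition Sa a := \sum_(c < m | c != a) (w a - w c)^-1.
Definition Cm a b := if a == b then Sa a else (w a - w b)^-1.

Lemma kk_neq0 b : kk b != 0.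
Proof.
rewrite /kk /Pb horner_prod; apply/prodf_neq0 => c cb.
by rewrite hornerXsubC subr_eq0 (inj_eq winj) eq_sym.
Qed.

Lemma Pb_root a b : a != b -> (Pb b).[w a] = 0.
Proof.
move=> ab; rewrite /Pb horner_prod (bigD1 a) //= hornerXsubC subrr mul0r //.
Qed.

Lemma size_Pb b : (size (Pb b) <= m)%N.
Proof.
rewrite /Pb -big_filter size_prod_XsubC.
rewrite deprecated_filter_index_enum -cardE.
have -> : #|[pred i : 'I_m | i != b]| = #|predC1 b| by apply: eq_card.
by rewrite cardC1 card_ord; case: (m) b => // [[]].
Qed.

Lemma interp (p : {poly F}) : (size p <= m)%N ->
  p = \sum_b (p.[w b] / kk b)%:P * Pb b.
Proof.
move=> sp; apply/eqP; rewrite -subr_eq0; apply/eqP.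
apply: (@roots_geq_poly_eq0 _ _ [seq w b | b <- enum 'I_m]).
- apply/allP => _ /mapP[a _ ->]; rewrite /root hornerD hornerN horner_sum.
  rewrite (bigD1 a) //= big1 ?addr0.
    by rewrite hornerM hornerC mulfVK ?kk_neq0 // subrr.
  by move=> b ba; rewrite hornerM Pb_root ?mulr0 // eq_sym.
- by rewrite map_inj_uniq ?enum_uniq.
- rewrite size_map size_enum_ord.
  apply: (leq_trans (size_polyD _ _)); rewrite geq_max sp /= size_polyN.
  apply: (leq_trans (size_sum _ _ _)).
  apply/bigmax_leqP => b _; rewrite mul_polyC; apply: (leq_trans (size_scale_leq _ _)).
  exact: size_Pb.
Qed.

Lemma dlog (I : Type) (r : seq I) (f : I -> F) t : all (fun i => t != f i) r ->
  (\prod_(i <- r) ('X - (f i)%:P))^`().[t] =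
  (\prod_(i <- r) (t - f i)) * \sum_(i <- r) (t - f i)^-1.
Proof.
elim: r => [|i r IH] /=; first by rewrite !big_nil derivC horner0 mulr0.
move=> /andP[ti hr]; rewrite !big_cons derivM derivXsubC mul1r hornerD hornerM IH //.
rewrite hornerXsubC horner_prod.
under eq_bigr => j _ do rewrite hornerXsubC.
have ti' : t - f i != 0 by rewrite subr_eq0.
set P := \prod_(_ <- _) _; set S := \sum_(_ <- _) _.
by field.
Qed.

Lemma dPb a b : (Pb b)^`().[w a] = kk a * Cm a b.
Proof.
rewrite /Cm; case: eqP => [<-|/eqP ab].
  rewrite /Pb -big_filter dlog; last first.
    by apply/allP => c; rewrite mem_filter => /andP[ca _]; rewrite (inj_eq winj) eq_sym.
  by rewrite big_filter /kk /Pb horner_prod /Sa big_filter; congr (_ * _);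
    apply: eq_bigr => c _; rewrite hornerXsubC.
have ba : b != a by rewrite eq_sym.
rewrite /Pb (bigD1 a) //=.
rewrite derivM derivXsubC mul1r hornerD hornerM hornerXsubC subrr mul0r addr0.
rewrite /kk /Pb [in RHS](bigD1 b) //= hornerM hornerXsubC mulrAC mulfV ?mul1r; last first.
  by rewrite subr_eq0 (inj_eq winj).
by congr horner; apply: eq_bigl => c; rewrite andbC.
Qed.

Lemma key a l : (l < m)%N ->
  l%:R * w a ^+ l.-1 = \sum_b (w b ^+ l / kk b) * (kk a * Cm a b).
Proof.
move=> lm.
have sl : (size ('X^l : {poly F}) <= m)%N by rewrite size_polyXn.
have := congr1 (fun p => p^`().[w a]) (@interp 'X^l sl).
rewrite derivXn hornerMn hornerXn -mulr_natl => ->.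
rewrite raddf_sum horner_sum; apply: eq_bigr => b _.
by rewrite /= deriv_mulC hornerM hornerC hornerXn dPb.
Qed.

Lemma main_alg (dd ee : 'I_m -> F) :
  \det (\matrix_(a < m, l < m) cnF (dd a) (ee a) (w a) l) =
  (\prod_(a < m) \prod_(b < m | (a < b)%N) (w b - w a)) *
  \det (\matrix_(a < m, b < m) ((a == b)%:R * dd a + ee a * Cm a b)).
Proof.
set G := \matrix_(a < m, b < m) ((a == b)%:R * dd a + ee a * Cm a b).
set V := \matrix_(b < m, l < m) (w b ^+ l / kk b).
have E : \matrix_(a < m, l < m) cnF (dd a) (ee a) (w a) l = diag_mx (\row_a kk a) *m G *m V.
  apply/matrixP => a l; rewrite mul_diag_mx !mxE.
  under eq_bigr => b _ do rewrite !mxE mulrDr mulrDl.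
  rewrite big_split /= (bigD1 a) //= big1 ?addr0; last first.
    by move=> b ba; rewrite eq_sym (negPf ba) mul0r mulr0 mul0r.
  rewrite eqxx mul1r /cnF.
  have -> : \sum_(i < m) kk a * (ee a * Cm a i) * (w i ^+ l / kk i) =
     ee a * \sum_b (w b ^+ l / kk b) * (kk a * Cm a b).
    rewrite mulr_sumr; apply: eq_bigr => b _; ring.
  rewrite -key ?ltn_ord //.
  have := kk_neq0 a; move: (kk a) => k0 hk0; by field.
have EV : V = diag_mx (\row_b (kk b)^-1) *m (Vandermonde m (\row_j w j))^T.
  by apply/matrixP => b l; rewrite mul_diag_mx !mxE mulrC.
rewrite E EV !det_mulmx !det_diag det_tr det_Vandermonde.
have hAB : \prod_(i < m) (\row_a kk a) 0 i * (\prod_(i < m) (\row_b (kk b)^-1) 0 i) = 1.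
  rewrite -big_split /=; apply: big1 => i _; rewrite !mxE mulfV //; exact: kk_neq0.
rewrite mulrAC mulrA hAB mul1r; congr (_ * _).
by apply: eq_bigr => i _; apply: eq_bigr => j _; rewrite !mxE.
Qed.
End Alg.

Section A.
Variable R : realType.
Variables (al be ga de : R).

Definition phi (p q r s : R) (t : R) : R :=
  (q * t + p) * (expR (al * t + be) * cos (ga * t + de)) +
  (s * t + r) * (expR (al * t + be) * sin (ga * t + de)).

Lemma dexpaff (t : R) : is_derive t 1 (fun t : R => expR (al * t + be)) (al * expR (al * t + be)).
Proof.
have h1 : is_derive t 1 (fun t : R => al * t + be) al.
  by apply: is_derive_eq; rewrite scaler1 addr0.
apply: (is_derive_eq (@is_derive1_comp R expR (fun s => al * s + be) t _ _ (is_derive_expR _) h1)).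
by rewrite mulrC.
Qed.

Lemma dcosaff (t : R) : is_derive t 1 (fun t : R => cos (ga * t + de)) (- (ga * sin (ga * t + de))).
Proof.
have h1 : is_derive t 1 (fun t : R => ga * t + de) ga.
  by apply: is_derive_eq; rewrite scaler1 addr0.
apply: (is_derive_eq (@is_derive1_comp R cos (fun s => ga * s + de) t _ _ (is_derive_cos _) h1)).
by rewrite mulrC mulrN.
Qed.

Lemma dsinaff (t : R) : is_derive t 1 (fun t : R => sin (ga * t + de)) (ga * cos (ga * t + de)).
Proof.
have h1 : is_derive t 1 (fun t : R => ga * t + de) ga.
  by apply: is_derive_eq; rewrite scaler1 addr0.
apply: (is_derive_eq (@is_derive1_comp R sin (fun s => ga * s + de) t _ _ (is_derive_sin _) h1)).
by rewrite mulrC.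
Qed.

Lemma dphi p q r s (t : R) : is_derive t 1 (phi p q r s)
  (phi (q + al * p + ga * r) (al * q + ga * s) (s + al * r - ga * p) (al * s - ga * q) t).
Proof.
have hE := dexpaff t; have hC := dcosaff t; have hS := dsinaff t.
have hA : is_derive t 1 (fun t : R => q * t + p) q.
  by apply: is_derive_eq; rewrite scaler1 addr0.
have hB : is_derive t 1 (fun t : R => s * t + r) s.
  by apply: is_derive_eq; rewrite scaler1 addr0.
have := is_deriveD (is_deriveM hA (is_deriveM hE hC)) (is_deriveM hB (is_deriveM hE hS)).
move=> H; apply: (is_derive_eq H).
rewrite /phi /= /GRing.scale /=.
set E := expR _; set C := cos _; set S := sin _.
rewrite !mulrfctE -/E -/C -/S. ring.
Qed.

Lemma derive1_phi p q r s : derive1 (phi p q r s : R -> R^o) =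
  phi (q + al * p + ga * r) (al * q + ga * s) (s + al * r - ga * p) (al * s - ga * q).
Proof.
apply/funext => t; rewrite derive1E; by case: (dphi p q r s t).
Qed.
End A.
Arguments phi {R}.

Local Open Scope complex_scope.
Section B.
Variable R : realType.

Definition ReF (c d z e : R[i]) := fun t : R => complex.Re ((c + t%:C * d) * cexp (z * t%:C + e)) : R^o.
Definition ImF (c d z e : R[i]) := fun t : R => complex.Im ((c + t%:C * d) * cexp (z * t%:C + e)) : R^o.

Lemma ReFE c d z e : ReF c d z e = phi (complex.Re z) (complex.Re e) (complex.Im z) (complex.Im e)
  (complex.Re c) (complex.Re d) (- complex.Im c) (- complex.Im d).
Proof.
apply/funext => t; case: c => cr ci; case: d => dr di; case: z => zr zi; case: e => er ei.
rewrite /ReF /phi /cexp /=.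
rewrite !mulr0 !mul0r !subr0 !addr0 !add0r; ring.
Qed.

Lemma ImFE c d z e : ImF c d z e = phi (complex.Re z) (complex.Re e) (complex.Im z) (complex.Im e)
  (complex.Im c) (complex.Im d) (complex.Re c) (complex.Re d).
Proof.
apply/funext => t; case: c => cr ci; case: d => dr di; case: z => zr zi; case: e => er ei.
rewrite /ImF /phi /cexp /=.
rewrite !mulr0 !mul0r !subr0 !addr0 !add0r; ring.
Qed.

Lemma derive1_ReF c d z e : derive1 (ReF c d z e) = ReF (d + z * c) (z * d) z e.
Proof.
rewrite !ReFE derive1_phi; case: c => cr ci; case: d => dr di; case: z => zr zi; case: e => er ei => /=.
congr phi; ring.
Qed.

Lemma derive1_ImF c d z e : derive1 (ImF c d z e) = ImF (d + z * c) (z * d) z e.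
Proof.
rewrite !ImFE derive1_phi; case: c => cr ci; case: d => dr di; case: z => zr zi; case: e => er ei => /=.
congr phi; ring.
Qed.

Definition cn (c d z : R[i]) (n : nat) := z ^+ n * c + n%:R * z ^+ n.-1 * d.

Lemma cnS c d z n : d * z ^+ n + z * cn c d z n = cn c d z n.+1.
Proof.
rewrite /cn; case: n => [|n] /=; first by rewrite !expr0 !mul0r expr1 !mulr1 addr0 mul1r; ring.
rewrite !exprS -!natr1; ring.
Qed.

Lemma derive1n_ReF n c d z e : derive1n n (ReF c d z e) = ReF (cn c d z n) (z ^+ n * d) z e.
Proof.
elim: n => [|n IH]; first by rewrite derive1n0 /cn !expr0 !mul1r; congr ReF; ring.
rewrite derive1nS IH derive1_ReF; congr ReF; last by rewrite exprS mulrA.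
by rewrite -cnS mulrC.
Qed.

Lemma derive1n_ImF n c d z e : derive1n n (ImF c d z e) = ImF (cn c d z n) (z ^+ n * d) z e.
Proof.
elim: n => [|n IH]; first by rewrite derive1n0 /cn !expr0 !mul1r; congr ImF; ring.
rewrite derive1nS IH derive1_ImF; congr ImF; last by rewrite exprS mulrA.
by rewrite -cnS mulrC.
Qed.

Lemma cderivn_gen l (g : R[i] -> R[i]) w c d z e :
  (forall t : R, g (w + t%:C) = (c + t%:C * d) * cexp (z * t%:C + e)) ->
  cderivn l g w = cn c d z l * cexp e.
Proof.
move=> hg; rewrite /cderivn.
have -> : (fun t : R => complex.Re (g (w + t%:C)) : R^o) = ReF c d z e.
  by apply/funext => t; rewrite /ReF hg.
have -> : (fun t : R => complex.Im (g (w + t%:C)) : R^o) = ImF c d z e.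
  by apply/funext => t; rewrite /ImF hg.
rewrite derive1n_ReF derive1n_ImF /ReF /ImF.
have -> : ((0 : R)%:C) = 0 by [].
by rewrite !mul0r mulr0 addr0 add0r; case: (_ * _).
Qed.
End B.

Arguments cnF {F}.
Arguments Cm {F m}.
Arguments Sa {F m}.
Lemma poly_cofinite (F : numDomainType) (p : {poly F}) (s : seq F) :
  (forall x, x \notin s -> p.[x] = 0) -> p = 0.
Proof.
move=> hp.
pose r := [seq y <- [seq (i%:R : F) | i <- iota 0 (size p + size s)] | y \notin s].
apply: (@roots_geq_poly_eq0 _ _ r).
- by apply/allP => y; rewrite mem_filter => /andP[ys _]; apply/eqP/hp.
- rewrite filter_uniq // map_inj_uniq ?iota_uniq //; by move=> i j /eqP; rewrite eqr_nat => /eqP.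
- rewrite /r size_filter.
  set t := [seq _ | _ <- _].
  have ut : uniq t by rewrite map_inj_uniq ?iota_uniq //; by move=> i j /eqP; rewrite eqr_nat => /eqP.
  have := count_predC (fun y => y \notin s) t.
  have hc : (count (predC (fun y => y \notin s)) t <= size s)%N.
    rewrite -size_filter; apply: uniq_leq_size; first exact: filter_uniq.
    by move=> y; rewrite mem_filter /= negbK => /andP[].
  rewrite size_map size_iota => e.
  have : (size p + size s <= count (fun y => y \notin s) t + size s)%N by rewrite -e leq_add2l.
  by rewrite leq_add2r.
Qed.

Section C.
Variable R : realType.

Lemma cexpD (a b : R[i]) : cexp (a + b) = cexp a * cexp b.
Proof.
case: a => ar ai; case: b => br bi; rewrite /cexp /= expRD cosD sinD.
apply/eqP; rewrite eq_complex /=; apply/andP; split; apply/eqP; ring.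
Qed.

Lemma cexp0 : cexp (0 : R[i]) = 1.
Proof. by rewrite /cexp /= expR0 cos0 sin0 mulr1 mulr0. Qed.

Lemma cexp_sum (I : Type) (r : seq I) (P : pred I) (f : I -> R[i]) :
  cexp (\sum_(i <- r | P i) f i) = \prod_(i <- r | P i) cexp (f i).
Proof. exact: (big_morph _ cexpD cexp0). Qed.

Lemma det_scale_rows m (E : 'I_m -> R[i]) (A : 'I_m -> 'I_m -> R[i]) :
  \det (\matrix_(i, j) (E i * A i j)) = (\prod_i E i) * \det (\matrix_(i, j) A i j).
Proof.
have -> : \matrix_(i, j) (E i * A i j) = diag_mx (\row_i E i) *m \matrix_(i, j) A i j.
  by rewrite mul_diag_mx; apply/matrixP => i j; rewrite !mxE.
by rewrite det_mulmx det_diag; congr (_ * _); apply: eq_bigr => i _; rewrite mxE.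
Qed.

Lemma cderiv_fa n (z mu : 'I_n -> R[i]) a l x :
  cderivn l (fa z mu a) x = cnF (x + mu a) 1 (z a) l * cexp (z a * x).
Proof.
apply: cderivn_gen => t; rewrite /fa mulr1 addrAC mulrDr [z a * x + _]addrC //.
Qed.

Lemma cderiv_exp u l (x : R[i]) :
  cderivn l (fun x => cexp (u * x)) x = cnF 1 0 u l * cexp (u * x).
Proof.
apply: cderivn_gen => t; rewrite mulr0 addr0 mul1r mulrDr [u * x + _]addrC //.
Qed.

Lemma W0_eq n (z mu : 'I_n -> R[i]) x :
  W0 z mu x = \det (\matrix_(a < n, l < n) cnF (x + mu a) 1 (z a) l).
Proof.
rewrite /W0 /wronskian.
have -> : \matrix_(k < n, l < n) cderivn l (fa z mu k) x =
          \matrix_(k < n, l < n) (cexp (z k * x) * cnF (x + mu k) 1 (z k) l).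
  by apply/matrixP => k l; rewrite !mxE cderiv_fa mulrC.
by rewrite det_scale_rows mulrA -cexp_sum -cexpD addNr cexp0 mul1r.
Qed.

Lemma W0_final n (z mu : 'I_n -> R[i]) x : injective z ->
  W0 z mu x = Delta z * \det (x%:M - Qmat z mu).
Proof.
move=> zi; rewrite W0_eq (@main_alg _ _ _ zi (fun a => x + mu a) (fun _ => 1)).
congr (_ * \det _); apply/matrixP => a b; rewrite !mxE /Cm /Sa /ha mul1r.
have [->|ab] := eqVneq a b; first by rewrite /=; ring.
by rewrite -[(z b - z a)^-1]opprK -invrN opprB /=; ring.
Qed.

Definition wu {n} (z : 'I_n -> R[i]) u (k : 'I_n.+1) :=
  if unlift ord_max k is Some a then z a else u.
Definition ddu {n} (mu : 'I_n -> R[i]) x (k : 'I_n.+1) :=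
  if unlift ord_max k is Some a then x + mu a else 1.
Definition eeu {n} (k : 'I_n.+1) : R[i] :=
  if unlift ord_max k is Some _ then 1 else 0.

Lemma unlift_lift_max m (i : 'I_m) : unlift ord_max (lift ord_max i) = Some i.
Proof. exact: liftK. Qed.

Lemma Wux_eq n (z mu : 'I_n -> R[i]) u x :
  Wux z mu u x = \det (\matrix_(k < n.+1, l < n.+1) cnF (ddu mu x k) (eeu k) (wu z u k) l).
Proof.
rewrite /Wux /wronskian.
have -> : \matrix_(k < n.+1, l < n.+1) cderivn l (fam_u z mu u k) x =
   \matrix_(k < n.+1, l < n.+1) (cexp (wu z u k * x) * cnF (ddu mu x k) (eeu k) (wu z u k) l).
  apply/matrixP => k l; rewrite !mxE /fam_u /wu /ddu /eeu.
  by case: (unlift ord_max k) => [a|]; rewrite ?cderiv_fa ?cderiv_exp mulrC.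
rewrite det_scale_rows mulrA -cexp_sum -cexpD.
rewrite (bigD1_ord ord_max) //= /wu unlift_none.
set S1 := \sum_(i < n) z i * x.
set S2 := \sum_(i < n) _.
have -> : S2 = S1 by apply: eq_bigr => i _; rewrite unlift_lift_max.
rewrite [X in cexp X](_ : _ = 0) ?cexp0 ?mul1r //.
ring.
Qed.

Section Wdistinct.
Variables (n : nat) (z mu : 'I_n -> R[i]) (u x : R[i]).
Hypothesis zinj : injective z.
Hypothesis hu : forall a, u != z a.

Lemma wu_inj : injective (wu z u).
Proof.
move=> k1 k2; rewrite /wu.
case: unliftP => [a1 ->|->]; case: unliftP => [a2 ->|->] //.
- by move/zinj ->.
- by move=> e; have := hu a1; rewrite e eqxx.
- by move=> e; have := hu a2; rewrite e eqxx.
Qed.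

Lemma Delta_wu : Delta (wu z u) = Delta z * \prod_(a < n) (u - z a).
Proof.
rewrite /Delta (bigD1_ord ord_max) //= big_pred0; last first.
  by move=> b; rewrite ltnNge -ltnS ltn_ord.
rewrite mul1r -big_split /=; apply: eq_bigr => a _.
rewrite (bigD1_ord ord_max); last by have := ltn_ord a; rewrite /bump /=; lia.
rewrite /wu unlift_none !unlift_lift_max.
apply: (@eq_trans _ _ ((u - z a) * \prod_(b < n | (a < b)%N) (z b - z a))); last by rewrite mulrC.
congr (_ * _); apply: eq_big => b.
  by rewrite lift_max /bump (leqNgt n a) ltn_ord.
by move=> _; rewrite unlift_lift_max.
Qed.

Lemma Sa_wu j : Sa (wu z u) (lift ord_max j) =
  (z j - u)^-1 + \sum_(c < n | c != j) (z j - z c)^-1.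
Proof.
rewrite /Sa (bigD1_ord ord_max); last by rewrite neq_lift.
rewrite /wu unlift_none unlift_lift_max; congr (_ + _).
apply: eq_big => c; first by rewrite (inj_eq lift_inj).
by move=> _; rewrite !unlift_lift_max.
Qed.

Lemma det_Gm :
  \det (\matrix_(a < n.+1, b < n.+1) ((a == b)%:R * ddu mu x a + eeu a * Cm (wu z u) a b))
  = \det (\matrix_(i < n, j < n) ((x%:M - Qmat z mu) i j - (i == j)%:R / (u - z i))).
Proof.
rewrite (expand_det_row _ ord_max) (bigD1 ord_max) //= big1 ?addr0; last first.
  move=> j jn; rewrite !mxE /ddu /eeu unlift_none eq_sym (negPf jn).
  by rewrite mul0r mul0r add0r mul0r.
rewrite !mxE /ddu /eeu unlift_none eqxx mul0r addr0 mulr1 /= mulr1n mul1r /cofactor.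
rewrite -signr_odd addnn odd_double expr0 mul1r.
congr (\det _); apply/matrixP => i j; rewrite !mxE /ddu /eeu !unlift_lift_max (inj_eq lift_inj) /Cm (inj_eq lift_inj).
have [->|ij] := eqVneq i j.
  rewrite Sa_wu.
  rewrite /ha -[z j - u]opprB invrN /=; ring.
by rewrite /wu !unlift_lift_max -[z j - z i]opprB invrN /=; ring.
Qed.

Lemma det_rhs : \det ((u%:M - Zmat z) *m (x%:M - Qmat z mu) - 1%:M) =
  (\prod_(a < n) (u - z a)) *
  \det (\matrix_(i < n, j < n) ((x%:M - Qmat z mu) i j - (i == j)%:R / (u - z i))).
Proof.
rewrite -det_scale_rows; congr (\det _); apply/matrixP => i j.
rewrite !mxE (bigD1 i) //= big1 ?addr0; last first.
  by move=> k ik; rewrite !mxE eq_sym (negPf ik) /= subr0 mul0r.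
rewrite !mxE eqxx /=.
have [->|ij] := eqVneq i j; rewrite ?eqxx /=.
  have hj : u - z j != 0 by rewrite subr_eq0.
  by field.
have hi : u - z i != 0 by rewrite subr_eq0.
have zij : z j - z i != 0 by rewrite subr_eq0 (inj_eq zinj) eq_sym.
by field; rewrite hi zij.
Qed.

Lemma W_distinct :
  \det (\matrix_(k < n.+1, l < n.+1) cnF (ddu mu x k) (eeu k) (wu z u k) l) =
  Delta z * \det ((u%:M - Zmat z) *m (x%:M - Qmat z mu) - 1%:M).
Proof.
rewrite (@main_alg _ _ _ wu_inj (ddu mu x) eeu).
by rewrite -/(Delta (wu z u)) Delta_wu det_Gm det_rhs mulrA.
Qed.
End Wdistinct.

Lemma W_all n (z mu : 'I_n -> R[i]) x : injective z -> forall u,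
  \det (\matrix_(k < n.+1, l < n.+1) cnF (ddu mu x k) (eeu k) (wu z u k) l) =
  Delta z * \det ((u%:M - Zmat z) *m (x%:M - Qmat z mu) - 1%:M).
Proof.
move=> zinj.
pose LM : 'M[{poly R[i]}]_(n.+1) := \matrix_(k < n.+1, l < n.+1)
  (if unlift ord_max k is Some a then (cnF (x + mu a) 1 (z a) l)%:P else 'X^l).
pose RM : 'M[{poly R[i]}]_n := \matrix_(a < n, b < n)
  (('X - (z a)%:P) * ((x%:M - Qmat z mu) a b)%:P - ((a == b)%:R)%:P).
have hL u : (\det LM).[u] =
   \det (\matrix_(k < n.+1, l < n.+1) cnF (ddu mu x k) (eeu k) (wu z u k) l).
  rewrite -horner_evalE -det_map_mx; congr (\det _); apply/matrixP => k l.
  rewrite !mxE /ddu /eeu /wu; case: (unlift ord_max k) => [a|] /=.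
    by rewrite horner_evalE hornerC.
  by rewrite horner_evalE hornerXn /cnF mulr1 mulr0 addr0.
have hR u : ((Delta z)%:P * \det RM).[u] =
   Delta z * \det ((u%:M - Zmat z) *m (x%:M - Qmat z mu) - 1%:M).
  rewrite hornerM hornerC -horner_evalE -det_map_mx; congr (_ * \det _).
  apply/matrixP => i j; rewrite !mxE (bigD1 i) //= big1 ?addr0; last first.
    by move=> k ik; rewrite !mxE eq_sym (negPf ik) /= subr0 mul0r.
  rewrite !mxE eqxx /= horner_evalE hornerD hornerN hornerM hornerXsubC !hornerC.
  by rewrite mulr1n.
have E : \det LM - (Delta z)%:P * \det RM = 0.
  apply: (@poly_cofinite _ _ [seq z a | a <- enum 'I_n]) => u hu.
  rewrite hornerD hornerN hL hR W_distinct ?subrr // => a.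
  by apply: contra hu => /eqP ->; apply: map_f; rewrite mem_enum.
move=> u; rewrite -hL -hR; by move/eqP: E; rewrite subr_eq0 => /eqP ->.
Qed.
End C.

Theorem lemma4p1 (R : realType) (n : nat) (z mu : 'I_n -> R[i]) :
  injective z ->
  (forall u x : R[i],
      Wux z mu u x
      = Delta z * \det ((u%:M - Zmat z) *m (x%:M - Qmat z mu) - 1%:M)) /\
  (forall x : R[i], W0 z mu x = Delta z * \det (x%:M - Qmat z mu)).
Proof.
move=> zinj; split => [u x|x]; last exact: W0_final.
by rewrite Wux_eq (@W_all R n z mu x zinj u).
Qed.
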